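(* Let $(A,B,R)$ be a formal context whose concept lattice $\mathcal C(A,B,R)$ has no infinite chains, and let $C_l\in\mathcal C(A,B,R)$ be a meet-irreducible concept. Let $(A^*,B,R^* )$ be the context produced by Construction M below. Then $(\mathcal C(A,B,R)\setminus\{C_l\},\le)\cong(\mathcal C(A^*,B,R^* ),\le^* )$. Construction M. Let $\mathcal S(C_l)=\{C\in\mathcal C(A,B,R)\mid C<C_l\}$ and $C_l^s=\bigvee\mathcal S(C_l)$ (the bottom if $\mathcal S(C_l)=\varnothing$). Put $A'=A\setminus\mathrm{Atg}(C_l)$. (1) If $C_l^s\neq C_l$: if there exists a meet-decomposition of $C_l^s$ not containing $C_l$, or $\mathrm{Atg}(C_l^s)\neq\varnothing$, then $A^*=A'$ and $R^*=R\cap(A^*\times B)$. Otherwise $A^*=A'\cup\{a^*\}$ for a new attribute $a^*\notin A$ and $R^*=(R\cap(A'\times B))\cup\{(a^*,b)\mid b\in\mathcal E(C_l^s)\}$. (2) If $C_l^s=C_l$: let $\{C_l^{s_i}\mid i\in\Gamma\}$ be the maximal elements of $\mathcal S(C_l)$ and $\Gamma'=\{i\in\Gamma\mid$ every meet-decomposition of $C_l^{s_i}$ contains $C_l$, and $\mathrm{Atg}(C_l^{s_i})=\varnothing\}$. If $\Gamma'=\varnothing$, then $A^*=A'$ and $R^*=R\cap(A^*\times B)$. Otherwise $A^*=A'\cup\{a_i^*\mid i\in\Gamma'\}$ with pairwise distinct new attributes and $R^*=(R\cap(A'\times B))\cup\{(a_i^*,b)\mid i\in\Gamma',\ b\in\mathcal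 E(C_l^{s_i})\}$.
   Context: Formal context $(A,B,R)$, $R\subseteq A\times B$; $X^{\uparrow}=\{a\in A\mid (a,x)\in R\ \forall x\in X\}$, $Y^{\downarrow}=\{x\in B\mid (a,x)\in R\ \forall a\in Y\}$; concepts are pairs $(X,Y)$ with $X^\uparrow=Y$, $Y^\downarrow=X$, ordered by inclusion of extents; $\mathcal E(C)$ denotes the extent of concept $C$. $\mathrm{Atg}(C)=\{a\in A\mid (\{a\}^{\downarrow},\{a\}^{\downarrow\uparrow})=C\}$ (attributes generating $C$). A concept is meet-irreducible if it is not the top and is not the meet of two concepts both different from it. A meet-decomposition of a concept $C$ is a set $\psi$ of concepts with $C\notin\psi$ and $\bigwedge\psi=C$. $\le^*$ is the extent-inclusion order on $\mathcal C(A^*,B,R^* )$. *)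

(* Defs.v *)
From Stdlib Require Import List.
Set Implicit Arguments.

Section FCA.
Variables (A B : Type) (R : A -> B -> Prop).

(* X^up for X ⊆ B, Y^down for Y ⊆ A (the paper's convention: extents ⊆ B). *)
Definition up (X : B -> Prop) : A -> Prop := fun a => forall x, X x -> R a x.
Definition down (Y : A -> Prop) : B -> Prop := fun x => forall a, Y a -> R a x.

Record concept := Concept {
  ext : B -> Prop;
  int : A -> Prop;
  int_up : forall a, int a <-> up ext a;
  ext_down : forall x, ext x <-> down int x }.

Definition cle (C D : concept) : Prop := forall x, ext C x -> ext D x.
Definition clt (C D : concept) : Prop := cle C D /\ C <> D.

Definition is_lub (S : concept -> Prop) (C : concept) : Prop :=
  (forall D, S D -> cle D C) /\ (forall E, (forall D, S D -> cle D E) -> cle C E).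
Definition is_glb (S : concept -> Prop) (C : concept) : Prop :=
  (forall D, S D -> cle C D) /\ (forall E, (forall D, S D -> cle E D) -> cle E C).

Definition is_top (C : concept) : Prop := forall D, cle D C.

Definition meet_irreducible (C : concept) : Prop :=
  ~ is_top C /\
  forall C1 C2, is_glb (fun D => D = C1 \/ D = C2) C -> C1 = C \/ C2 = C.

Definition meet_decomposition (psi : concept -> Prop) (C : concept) : Prop :=
  ~ psi C /\ is_glb psi C.

Definition Atg (C : concept) (a : A) : Prop :=
  (forall x, ext C x <-> down (fun a' => a' = a) x) /\
  (forall a', int C a' <-> up (down (fun a'' => a'' = a)) a').

Definition finite_set (S : concept -> Prop) : Prop :=
  exists l : list concept, forall C, S C -> In C l.
Definition is_chain (S : concept -> Prop) : Prop :=
  forall C D, S C -> S D -> cle C D \/ cle D C.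
Definition no_infinite_chains : Prop :=
  forall S, is_chain S -> finite_set S.

Definition strictly_below (Cl : concept) : concept -> Prop := fun C => clt C Cl.

Definition maximal_below (Cl D : concept) : Prop :=
  strictly_below Cl D /\ forall E, strictly_below Cl E -> cle D E -> E = D.

Definition needs_new (Cl D : concept) : Prop :=
  (forall psi, meet_decomposition psi D -> psi Cl) /\ (forall a, ~ Atg D a).

(* Construction M.  Cls is C_l^s = \/ S(C_l).  New attributes are indexed by
   concepts: in case (1) the single index C_l^s, in case (2) the indices in Γ'
   (maximal elements of S(C_l)). *)
Definition new_index (Cl Cls D : concept) : Prop :=
  (Cls <> Cl /\ D = Cls /\ needs_new Cl D) \/
  (Cls = Cl /\ maximal_below Cl D /\ needs_new Cl D).

Definition in_Astar (Cl Cls : concept) (z : A + concept) : Prop :=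
  match z with
  | inl a => ~ Atg Cl a
  | inr D => new_index Cl Cls D
  end.

Definition Astar (Cl Cls : concept) : Type := { z : A + concept | in_Astar Cl Cls z }.

Definition Rstar (Cl Cls : concept) (z : Astar Cl Cls) (x : B) : Prop :=
  match proj1_sig z with
  | inl a => R a x
  | inr D => ext D x
  end.

End FCA.

(* Main.v *)
Require Import Defs.
From Stdlib Require Import ssrfun.
From Stdlib Require Import Classical ClassicalEpsilon FunctionalExtensionality PropExtensionality List FinFun PeanoNat Lia.

Lemma concept_eq {A B : Type} {R : A -> B -> Prop} (C D : concept R) :
  (forall x, ext C x <-> ext D x) -> C = D.
Proof.
  destruct C as [e1 i1 u1 d1], D as [e2 i2 u2 d2]; simpl; intro H.
  assert (e1 = e2) by (apply functional_extensionality; intro x; apply propositional_extensionality; auto).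
  subst e2.
  assert (i1 = i2).
  { apply functional_extensionality; intro a; apply propositional_extensionality.
    rewrite u1, u2; tauto. }
  subst i2. f_equal; apply proof_irrelevance.
Qed.

Definition mkc {A B : Type} {R : A -> B -> Prop} (X : B -> Prop)
  (H : forall x, down R (up R X) x -> X x) : concept R.
Proof.
  refine (@Concept A B R X (up R X) (fun a => conj (fun h => h) (fun h => h)) _).
  intro x; split; [intros Hx a Ha; apply Ha, Hx | apply H].
Defined.

Lemma meetS_closed {A B : Type} {R : A -> B -> Prop} (S : concept R -> Prop) :
  forall x, down R (up R (fun y => forall C, S C -> ext C y)) x ->
            (forall C, S C -> ext C x).
Proof.
  intros x Hx C SC. apply (ext_down C). intros a Ha. apply Hx.
  intros y Hy. specialize (Hy C SC). apply (ext_down C) in Hy. apply Hy, Ha.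
Qed.

Definition meetS {A B : Type} {R : A -> B -> Prop} (S : concept R -> Prop) : concept R :=
  mkc _ (meetS_closed S).

Lemma attr_closed {A B : Type} {R : A -> B -> Prop} (a : A) :
  forall x, down R (up R (fun y => R a y)) x -> R a x.
Proof. intros x Hx. apply Hx. intros y Hy; exact Hy. Qed.

Definition attrc {A B : Type} {R : A -> B -> Prop} (a : A) : concept R :=
  mkc _ (attr_closed (R:=R) a).

Lemma extremal {A B : Type} {R : A -> B -> Prop} (Hc : no_infinite_chains R)
  (r : concept R -> concept R -> Prop)
  (rc : forall x y, r x y -> cle x y \/ cle y x)
  (rt : forall x y z, r x y -> r y z -> r x z)
  (ra : forall x y, r x y -> r y x -> x = y)
  (P : concept R -> Prop) (x0 : concept R) (Px0 : P x0) :
  exists m, P m /\ forall y, P y -> r y m -> y = m.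
Proof.
  apply NNPP; intro H.
  assert (step : forall m : {m | P m}, {y : {m | P m} | r (proj1_sig y) (proj1_sig m) /\ proj1_sig y <> proj1_sig m}).
  { intro m; apply constructive_indefinite_description. destruct m as [m Pm].
    apply NNPP; intro H2; apply H; exists m; split; auto.
    intros y Py ry; apply NNPP; intro ne; apply H2; exists (exist _ y Py); simpl; auto. }
  pose (s := fix s (n : nat) : {m | P m} :=
          match n with 0 => exist _ x0 Px0 | S n => proj1_sig (step (s n)) end).
  pose (t := fun n => proj1_sig (s n)).
  assert (HS : forall n, r (t (S n)) (t n) /\ t (S n) <> t n).
  { intro n. unfold t. simpl. exact (proj2_sig (step (s n))). }
  assert (Hlt : forall k n, r (t (n + S k)) (t n)).
  { induction k; intro n.
    - rewrite Nat.add_1_r. apply HS.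
    - replace (n + S (S k)) with (S (n + S k)) by lia.
      eapply rt; [apply HS | apply IHk]. }
  assert (Hlt2 : forall n m, n < m -> r (t m) (t n)).
  { intros n m Hnm. replace m with (n + S (m - S n)) by lia.
    apply Hlt. }
  assert (Hinj : Injective t).
  { intros n m Heq. destruct (Nat.lt_total n m) as [Hnm|[E|Hnm]]; auto; exfalso.
    - destruct (Nat.eq_dec m (S n)) as [->|Hne].
      + apply (proj2 (HS n)); auto.
      + assert (r (t m) (t (S n))) by (apply Hlt2; lia).
        rewrite <- Heq in H0. apply (proj2 (HS n)). apply ra; [apply HS | exact H0].
    - destruct (Nat.eq_dec n (S m)) as [->|Hne].
      + apply (proj2 (HS m)); auto.
      + assert (r (t n) (t (S m))) by (apply Hlt2; lia).
        rewrite Heq in H0. apply (proj2 (HS m)). apply ra; [apply HS | exact H0]. }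
  assert (Hch : is_chain (fun C => exists n, C = t n)).
  { intros C D [n ->] [m ->]. destruct (Nat.lt_total n m) as [Hnm|[E|Hnm]].
    - apply Hlt2 in Hnm. apply rc in Hnm. tauto.
    - subst. left. intros x Hx; exact Hx.
    - apply Hlt2 in Hnm. apply rc in Hnm. tauto. }
  destruct (Hc _ Hch) as [l Hl].
  assert (Hin : incl (map t (seq 0 (S (length l)))) l).
  { intros C HC. apply in_map_iff in HC. destruct HC as [n [<- _]]. apply Hl. eauto. }
  apply NoDup_incl_length in Hin.
  - rewrite length_map, length_seq in Hin. lia.
  - apply Injective_map_NoDup; auto. apply seq_NoDup.
Qed.

Lemma cle_trans {A B : Type} {R : A -> B -> Prop} (x y z : concept R) :
  cle x y -> cle y z -> cle x z.
Proof. unfold cle; auto. Qed.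

Lemma cle_antisym {A B : Type} {R : A -> B -> Prop} (x y : concept R) :
  cle x y -> cle y x -> x = y.
Proof. intros H1 H2; apply concept_eq; split; auto. Qed.

Lemma irr_contra {A B : Type} {R : A -> B -> Prop} (Hc : no_infinite_chains R)
  (Cl : concept R) (Hirr : meet_irreducible Cl) (T : concept R -> Prop)
  (HT : forall C, T C -> cle Cl C /\ C <> Cl)
  (Hg : forall x, (forall C, T C -> ext C x) -> ext Cl x) : False.
Proof.
  pose (meetL := fun l : list (concept R) => meetS (fun C => In C l)).
  assert (Hind : forall l, (forall C, In C l -> T C) -> meetL l <> Cl).
  { induction l as [|c l IH]; intros Hl Heq.
    - apply (proj1 Hirr). intros D x _. rewrite <- Heq. simpl. intros C [].
    - destruct (proj2 Hirr c (meetL l)) as [E|E].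
      + rewrite <- Heq. split.
        * intros D [->| ->]; intros x Hx; simpl in Hx.
          -- apply Hx; left; auto.
          -- simpl; intros C HC; apply Hx; right; auto.
        * intros E HE x Hx. simpl. intros C [<-|HC].
          -- apply (HE c); auto.
          -- apply (HE (meetL l)); auto.
      + apply (proj2 (HT c (Hl c (or_introl eq_refl)))); auto.
      + apply (IH (fun C HC => Hl C (or_intror HC))); auto. }
  destruct (extremal Hc (@cle A B R) (fun x y h => or_introl h) (@cle_trans A B R) (@cle_antisym A B R)
     (fun M => exists l, (forall C, In C l -> T C) /\ M = meetL l) (meetL nil)) as [m [[l [Hl ->]] Hmin]].
  { exists nil; split; simpl; auto. intros C []. }
  apply (Hind l Hl). apply cle_antisym.
  - intros x Hx. apply Hg. intros C TC.
    assert (E : meetL (C :: l) = meetL l).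
    { apply Hmin.
      - exists (C :: l); split; auto. intros D [<-|HD]; auto.
      - intros y Hy; simpl in *; intros D HD; apply Hy; right; auto. }
    assert (Hx' : ext (meetL (C :: l)) x) by (rewrite E; exact Hx).
    apply Hx'; left; auto.
  - intros x Hx. simpl. intros C HC. apply (proj1 (HT C (Hl C HC))); auto.
Qed.

Definition rep {A B : Type} {R : A -> B -> Prop} (Cl Cls : concept R) (X : B -> Prop) : Prop :=
  forall x, down (@Rstar A B R Cl Cls) (up (@Rstar A B R Cl Cls) X) x -> X x.

Lemma down_single {A B : Type} (R : A -> B -> Prop) (a : A) (x : B) :
  down R (fun a' => a' = a) x <-> R a x.
Proof. split; intro H; [apply H; auto | intros a' ->; auto]. Qed.

Lemma up_ext {A B : Type} (R : A -> B -> Prop) (X Y : B -> Prop) (a : A) :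
  (forall x, X x <-> Y x) -> (up R X a <-> up R Y a).
Proof. intro H; split; intros H1 y Hy; apply H1, H, Hy. Qed.

Lemma rep_ext {A B : Type} {R : A -> B -> Prop} (Cl Cls : concept R) (X Y : B -> Prop) :
  (forall x, X x <-> Y x) -> rep Cl Cls X -> rep Cl Cls Y.
Proof.
  intros H HX x Hx. apply H, HX. intros z Hz. apply Hx. intros y Hy. apply Hz, H, Hy.
Qed.

Lemma rep_interC {A B : Type} {R : A -> B -> Prop} (Cl Cls : concept R) (S : concept R -> Prop) :
  (forall C, S C -> rep Cl Cls (ext C)) -> rep Cl Cls (fun x => forall C, S C -> ext C x).
Proof.
  intros HS x Hx C SC. apply HS; auto. intros z Hz. apply Hx. intros y Hy. apply Hz, Hy, SC.
Qed.

Lemma rep_and {A B : Type} {R : A -> B -> Prop} (Cl Cls : concept R) (X Y : B -> Prop) :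
  rep Cl Cls X -> rep Cl Cls Y -> rep Cl Cls (fun x => X x /\ Y x).
Proof.
  intros HX HY x Hx; split; [apply HX | apply HY]; intros z Hz; apply Hx; intros y [h1 h2]; apply Hz; auto.
Qed.

Lemma rep_attr {A B : Type} {R : A -> B -> Prop} (Cl Cls : concept R) (a : A) (h : ~ Atg Cl a) :
  rep Cl Cls (R a).
Proof.
  intros x Hx. exact (Hx (exist _ (inl a) h) (fun y hy => hy)).
Qed.

Lemma rep_new {A B : Type} {R : A -> B -> Prop} (Cl Cls D : concept R) (h : new_index Cl Cls D) :
  rep Cl Cls (ext D).
Proof.
  intros x Hx. exact (Hx (exist (in_Astar Cl Cls) (inr D) h) (fun y hy => hy)).
Qed.

Lemma rep_notle {A B : Type} {R : A -> B -> Prop} (Cl Cls C : concept R) :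
  ~ cle C Cl -> rep Cl Cls (ext C).
Proof.
  intros HC x Hx. apply (ext_down C). intros a Ha.
  assert (h : ~ Atg Cl a).
  { intros HA. apply HC. intros y Hy. apply (proj1 HA). apply down_single.
    apply (ext_down C) in Hy. apply Hy, Ha. }
  apply (rep_attr Cl Cls a h). intros z Hz; apply Hx; intros y Hy; apply Hz.
  apply (ext_down C) in Hy. apply Hy, Ha.
Qed.

Lemma rep_K {A B : Type} {R : A -> B -> Prop} (Cl Cls K : concept R) :
  K <> Cl -> (needs_new Cl K -> new_index Cl Cls K) ->
  (forall D, cle D Cl -> D <> Cl -> cle K D -> D = K) -> rep Cl Cls (ext K).
Proof.
  intros HK Hnew HD.
  destruct (classic (needs_new Cl K)) as [Hn|Hn]; [apply rep_new; auto|].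
  apply not_and_or in Hn. destruct Hn as [Hn|Hn].
  - apply not_all_ex_not in Hn. destruct Hn as [psi Hp].
    apply imply_to_and in Hp. destruct Hp as [[npK [glb1 glb2]] npCl].
    apply (rep_ext Cl Cls (fun x => forall D, psi D -> ext D x)).
    + intro x; split.
      * intro Hx. apply (glb2 (meetS psi)); auto. intros D HD1 y Hy. apply Hy, HD1.
      * intros Hx D HD1. apply (glb1 D HD1), Hx.
    + apply rep_interC. intros D HpD. apply rep_notle. intro Hle.
      assert (D = K). { apply HD; auto. intro; subst; auto. } 
      subst; auto.
  - apply not_all_not_ex in Hn. destruct Hn as [a Ha].
    apply (rep_ext Cl Cls (R a)).
    + intro x. rewrite (proj1 Ha x), down_single. tauto.
    + apply rep_attr. intro HA. apply HK. apply concept_eq. intro x.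
      rewrite (proj1 Ha x), (proj1 HA x). tauto.
Qed.

Lemma rep_all {A B : Type} {R : A -> B -> Prop} (Cl Cls : concept R)
  (Hchains : no_infinite_chains R) (HCls : is_lub (strictly_below Cl) Cls)
  (C : concept R) : C <> Cl -> rep Cl Cls (ext C).
Proof.
  intro HC.
  destruct (classic (cle C Cl)) as [Hle|Hle]; [|apply rep_notle; auto].
  assert (HK : exists K, cle C K /\ cle K Cl /\ K <> Cl /\ (needs_new Cl K -> new_index Cl Cls K)
     /\ (forall D, cle D Cl -> D <> Cl -> cle K D -> D = K)).
  { destruct (classic (Cls = Cl)) as [E|E].
    - destruct (extremal Hchains (fun x y => cle y x) (fun x y h => or_intror h)
        (fun x y z h1 h2 => cle_trans z y x h2 h1) (fun x y h1 h2 => cle_antisym x y h2 h1)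
        (fun M => strictly_below Cl M /\ cle C M) C) as [M [[HM1 HM2] HM3]].
      { split; [split; auto | intros x h; exact h]. }
      assert (Hmax : maximal_below Cl M).
      { split; auto. intros E' HE' HME. apply HM3; auto. split; auto. eapply cle_trans; eauto. }
      exists M; split; [|split; [|split; [|split]]]; auto.
      + apply HM1.
      + apply HM1.
      + intro Hn. right; auto.
      + intros D HD1 HD2 HD3. apply (proj2 Hmax); auto. split; auto.
    - exists Cls. split; [|split; [|split; [|split]]]; auto.
      + apply (proj1 HCls). split; auto.
      + apply (proj2 HCls). intros D HD; apply HD.
      + intro Hn. left; auto.
      + intros D HD1 HD2 HD3. apply cle_antisym; auto. apply (proj1 HCls). split; auto. }
  destruct HK as [K [HCK [HKCl [HKne [Hn HD]]]]].
  pose proof (rep_K Cl Cls K HKne Hn HD) as RK.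
  apply (rep_ext Cl Cls (fun x => (forall a, int C a -> ~ Atg Cl a -> R a x) /\ ext K x)).
  - intro x; split.
    + intros [H1 H2]. apply (ext_down C). intros a Ha.
      destruct (classic (Atg Cl a)) as [HA|HA]; auto.
      apply down_single. apply (proj1 HA). apply HKCl, H2.
    + intro Hx; split; auto. intros a Ha _. apply (ext_down C) in Hx. apply Hx, Ha.
  - apply rep_and; auto. intros x Hx a Ha HA. apply (rep_attr Cl Cls a HA).
    intros z Hz; apply Hx; intros y Hy; apply Hz; apply Hy; auto.
Qed.

Lemma old_closed {A B : Type} {R : A -> B -> Prop} (Cl Cls : concept R)
  (N : concept (@Rstar A B R Cl Cls)) :
  forall x, down R (up R (ext N)) x -> ext N x.
Proof.
  intros x Hx. apply (ext_down N). intros z Hz.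
  destruct z as [[a|D] h]; unfold Rstar; simpl.
  - apply Hx. intros y Hy. apply (ext_down N) in Hy. exact (Hy _ Hz).
  - apply (ext_down D). intros a Ha. apply Hx. intros y Hy. apply (ext_down N) in Hy.
    specialize (Hy _ Hz). apply (ext_down D) in Hy. apply Hy, Ha.
Qed.

Lemma g_neq {A B : Type} {R : A -> B -> Prop} (Cl Cls : concept R)
  (Hchains : no_infinite_chains R) (Hirr : meet_irreducible Cl)
  (N : concept (@Rstar A B R Cl Cls)) : mkc (ext N) (old_closed Cl Cls N) <> Cl.
Proof.
  intro E.
  assert (H : forall x, ext Cl x <-> ext N x).
  { intro x. pose proof (f_equal (fun C => ext C x) E) as E'. simpl in E'. rewrite <- E'. tauto. }
  apply (irr_contra Hchains Cl Hirr
    (fun C => exists z, int N z /\ forall x, ext C x <-> Rstar z x)).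
  - intros C [z [Hz HC]]. split.
    + intros x Hx. apply HC. apply H in Hx. apply (ext_down N) in Hx. apply Hx, Hz.
    + intro EC; rewrite EC in HC; clear EC. destruct z as [[a|D] h]; unfold Rstar in HC; simpl in HC.
      * apply h. split.
        -- intro x. rewrite HC. symmetry. apply down_single.
        -- intro a'. rewrite (int_up Cl). apply up_ext. intro y. rewrite HC, down_single. tauto.
      * assert (D = Cl) by (apply concept_eq; intro x; rewrite HC; tauto).
        pose proof h as h2; clear -h2 H0; destruct h2 as [[ne [eD _]]|[_ [[[_ ne] _] _]]].
        -- apply ne. congruence.
        -- apply ne; auto.
  - intros x Hx. apply H. apply (ext_down N). intros z Hz.
    destruct z as [[a|D] h].
    + apply (Hx (attrc a)). exists (exist _ (inl a) h); split; auto. simpl; tauto.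
    + apply (Hx D). exists (exist _ (inr D) h); split; auto. simpl; tauto.
Qed.

Lemma sig_eq {T : Type} {P : T -> Prop} (u v : {x : T | P x}) :
  proj1_sig u = proj1_sig v -> u = v.
Proof.
  destruct u as [u pu], v as [v pv]; simpl; intros ->. f_equal; apply proof_irrelevance.
Qed.

Theorem mainTheorem9 (A B : Type) (R : A -> B -> Prop) (Cl Cls : concept R)
  (Hchains : no_infinite_chains R)
  (Hirr : meet_irreducible Cl)
  (HCls : is_lub (strictly_below Cl) Cls) :
  exists f : { C : concept R | C <> Cl } -> concept (@Rstar A B R Cl Cls),
    bijective f /\
    (forall C D : { C : concept R | C <> Cl },
        cle (proj1_sig C) (proj1_sig D) <-> cle (f C) (f D)).
Proof.
  exists (fun C => mkc (R := @Rstar A B R Cl Cls) (ext (proj1_sig C))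
                       (rep_all Cl Cls Hchains HCls (proj1_sig C) (proj2_sig C))).
  split.
  - apply (@ssrfun.Bijective _ _ _ (fun N => exist (fun C => C <> Cl) (mkc (ext N) (old_closed Cl Cls N))
                                     (g_neq Cl Cls Hchains Hirr N))).
    + intro C. apply sig_eq. simpl. apply concept_eq. simpl. tauto.
    + intro N. apply concept_eq. simpl. tauto.
  - intros C D. unfold cle. simpl. tauto.
Qed.
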